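(* Let $B$ be a finite set of Boolean functions. Then there exists an MSO formula $\theta_{\mathit{imp}}$ over the vocabulary $\tau_{B,\mathit{imp}}$ such that for every set $\Gamma$ of propositional $B$-formulae and all $F,G\subseteq\Gamma$ it holds that $F\models G$ if and only if $\mathcal{A}_{F,G}\models\theta_{\mathit{imp}}$.
   Context: For a finite set $B$ of Boolean functions, a $B$-formula is a propositional formula built from propositional variables by applying functions $f\in B$ (0-ary functions act as constants). $F\models G$ means every assignment satisfying all formulae of $F$ satisfies all formulae of $G$. Let $\tau_B$ consist of a unary symbol $\mathrm{const}_f$ for each 0-ary $f\in B$ and a binary symbol $\mathrm{conn}_{f,i}$ for each $f\in B$, $1\le i\le\mathrm{arity}(f)$; let $\tau_{B,\mathit{imp}}=\tau_B\cup\{\mathrm{var},\mathrm{repr},\mathrm{reprPrem},\mathrm{reprConc}\}$, all new symbols unary. For sets $F,G$ of $B$-formulae, $\mathcal{A}_{F,G}$ is the $\tau_{B,\mathit{imp}}$-structure whose universe is the set of subformulae of formulae in $F\cup G$, where $\mathrm{var}(x)$ holds iff $x$ is a variable, $\mathrm{repr}(x)$ iff $x\in F\cup G$, $\mathrm{const}_f(x)$ iff $x$ is the constant $f$, $\mathrm{conn}_{f,i}(x,y)$ iff $x$ is the $i$-th argument of the function $f$ at the root of $y$, $\mathrm{reprPrem}(x)$ iff $x\in F$, and $\mathrm{reprConc}(x)$ iff $x\in G$. *)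

(* Defs.v *)
From mathcomp Require Import all_boot.
From Stdlib Require List.
Set Implicit Arguments. Unset Strict Implicit. Unset Printing Implicit Defensive.

Definition boolfun : Type := {n : nat & {ffun n.-tuple bool -> bool}}.
Definition bf_arity (f : boolfun) : nat := projT1 f.

Definition bf_apply (f : boolfun) (s : seq bool) : bool :=
  match (insub s : option ((bf_arity f).-tuple bool)) with
  | Some t => projT2 f t
  | None => false
  end.

Inductive form : Type :=
| Var (v : nat)
| App (f : boolfun) (args : seq form).

Fixpoint is_Bform (B : seq boolfun) (phi : form) : Prop :=
  match phi with
  | Var _ => True
  | App f args =>
      f \in B /\ size args = bf_arity f /\
      (fix all_B (l : seq form) : Prop :=
         match l with nil => True | a :: l' => is_Bform B a /\ all_B l' end) args
  end.

Fixpoint eval (sigma : nat -> bool) (phi : form) : bool :=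
  match phi with
  | Var v => sigma v
  | App f args => bf_apply f (map (eval sigma) args)
  end.

Definition entails (F G : seq form) : Prop :=
  forall sigma : nat -> bool,
    (forall phi, List.In phi F -> eval sigma phi) ->
    (forall psi, List.In psi G -> eval sigma psi).

Inductive subf : form -> form -> Prop :=
| subf_refl x : subf x x
| subf_arg x f args a : List.In a args -> subf x a -> subf x (App f args).

Inductive sym : Type :=
| SConst (f : boolfun)
| SConn (f : boolfun) (i : nat)
| SVar | SRepr | SReprPrem | SReprConc.

Definition in_voc1 (B : seq boolfun) (s : sym) : Prop :=
  match s with
  | SConst f => f \in B /\ bf_arity f = 0
  | SConn _ _ => False
  | _ => True
  end.

Definition in_voc2 (B : seq boolfun) (s : sym) : Prop :=
  match s with
  | SConn f i => f \in B /\ 1 <= i <= bf_arity f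
  | _ => False
  end.

Inductive mso : Type :=
| MRel1 (s : sym) (x : nat)
| MRel2 (s : sym) (x y : nat)
| MEq (x y : nat)
| MIn (x X : nat)
| MTrue | MFalse
| MNot (p : mso)
| MAnd (p q : mso)
| MOr (p q : mso)
| MImp (p q : mso)
| MEx1 (x : nat) (p : mso)
| MAll1 (x : nat) (p : mso)
| MEx2 (X : nat) (p : mso)
| MAll2 (X : nat) (p : mso).

Fixpoint mso_wf (B : seq boolfun) (p : mso) : Prop :=
  match p with
  | MRel1 s _ => in_voc1 B s
  | MRel2 s _ _ => in_voc2 B s
  | MEq _ _ | MIn _ _ | MTrue | MFalse => True
  | MNot p => mso_wf B p
  | MAnd p q | MOr p q | MImp p q => mso_wf B p /\ mso_wf B q
  | MEx1 _ p | MAll1 _ p | MEx2 _ p | MAll2 _ p => mso_wf B p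
  end.

Fixpoint fo_free (n : nat) (p : mso) : Prop :=
  match p with
  | MRel1 _ x => x = n
  | MRel2 _ x y | MEq x y => x = n \/ y = n
  | MIn x _ => x = n
  | MTrue | MFalse => False
  | MNot p => fo_free n p
  | MAnd p q | MOr p q | MImp p q => fo_free n p \/ fo_free n q
  | MEx1 x p | MAll1 x p => x <> n /\ fo_free n p
  | MEx2 _ p | MAll2 _ p => fo_free n p
  end.

Fixpoint so_free (n : nat) (p : mso) : Prop :=
  match p with
  | MRel1 _ _ | MRel2 _ _ _ | MEq _ _ | MTrue | MFalse => False
  | MIn _ X => X = n
  | MNot p => so_free n p
  | MAnd p q | MOr p q | MImp p q => so_free n p \/ so_free n q
  | MEx1 _ p | MAll1 _ p => so_free n p
  | MEx2 X p | MAll2 X p => X <> n /\ so_free n p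
  end.

Definition mso_closed (p : mso) : Prop :=
  forall n, ~ fo_free n p /\ ~ so_free n p.

Record structure : Type := Structure {
  univ : Type;
  rel1 : sym -> univ -> Prop;
  rel2 : sym -> univ -> univ -> Prop }.

Definition upd1 {U} (nu : nat -> option U) (x : nat) (u : U) : nat -> option U :=
  fun y => if y == x then Some u else nu y.
Definition upd2 {U} (nu : nat -> U -> Prop) (X : nat) (S : U -> Prop)
  : nat -> U -> Prop :=
  fun Y => if Y == X then S else nu Y.

(* satisfaction; first-order assignments are partial (so that the empty
   structure is handled); second-order variables range over ALL subsets *)
Arguments Structure : clear implicits.
Unset Implicit Arguments.
Fixpoint sat (A : structure) (nu1 : nat -> option (univ A))
  (nu2 : nat -> univ A -> Prop) (p : mso) : Prop :=
  match p with
  | MRel1 s x => exists u, nu1 x = Some u /\ @rel1 A s u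
  | MRel2 s x y => exists u v, nu1 x = Some u /\ nu1 y = Some v /\ @rel2 A s u v
  | MEq x y => exists u, nu1 x = Some u /\ nu1 y = Some u
  | MIn x X => exists u, nu1 x = Some u /\ nu2 X u
  | MTrue => True
  | MFalse => False
  | MNot p => ~ sat A nu1 nu2 p
  | MAnd p q => sat A nu1 nu2 p /\ sat A nu1 nu2 q
  | MOr p q => sat A nu1 nu2 p \/ sat A nu1 nu2 q
  | MImp p q => sat A nu1 nu2 p -> sat A nu1 nu2 q
  | MEx1 x p => exists u, sat A (upd1 nu1 x u) nu2 p
  | MAll1 x p => forall u, sat A (upd1 nu1 x u) nu2 p
  | MEx2 X p => exists S, sat A nu1 (upd2 nu2 X S) p
  | MAll2 X p => forall S, sat A nu1 (upd2 nu2 X S) p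
  end.

Set Implicit Arguments.
Definition models (A : structure) (p : mso) : Prop :=
  sat A (fun _ => None) (fun _ _ => False) p.

Definition AFG_univ (F G : seq form) : Type :=
  {x : form | exists phi, List.In phi (F ++ G) /\ subf x phi}.

Definition AFG_rel1 (F G : seq form) (s : sym) (x : AFG_univ F G) : Prop :=
  let x := proj1_sig x in
  match s with
  | SVar => exists v, x = Var v
  | SRepr => List.In x (F ++ G)
  | SReprPrem => List.In x F
  | SReprConc => List.In x G
  | SConst f => bf_arity f = 0 /\ x = App f nil
  | SConn _ _ => False
  end.

(* conn_{f,i}(x,y) iff x is the i-th (1-based) argument of f at the root of y *)
Definition AFG_rel2 (F G : seq form) (s : sym) (x y : AFG_univ F G) : Prop :=
  match s with
  | SConn f i => exists args, proj1_sig y = App f args /\ 1 <= i /\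
                   List.nth_error args (i - 1) = Some (proj1_sig x)
  | _ => False
  end.

Definition AFG (F G : seq form) : structure :=
  Structure (AFG_univ F G) (@AFG_rel1 F G) (@AFG_rel2 F G).

(* Main.v *)
Require Import Defs.
From mathcomp Require Import all_boot.
From Stdlib Require List.
From Stdlib Require Import ProofIrrelevance ClassicalEpsilon.

Definition lit (b : bool) (p : mso) := if b then p else MNot p.
Definition bigAndM {T} (g : T -> mso) (s : seq T) :=
  foldr (fun x acc => MAnd (g x) acc) MTrue s.
Definition argok (f : boolfun) (t : (bf_arity f).-tuple bool)
  (i : 'I_(bf_arity f)) : mso :=
  MEx1 1 (MAnd (MRel2 (SConn f i.+1) 1 0) (lit (tnth t i) (MIn 1 0))).
Definition root0 (f : boolfun) : mso :=
  if bf_arity f == 0 then MRel1 (SConst f) 0 else MTrue.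
Definition Cft (f : boolfun) (t : (bf_arity f).-tuple bool) : mso :=
  MImp (MAnd (root0 f) (bigAndM (@argok f t) (enum 'I_(bf_arity f))))
       (lit (projT2 f t) (MIn 0 0)).
Definition Cf (f : boolfun) : mso :=
  bigAndM (@Cft f) (enum {: (bf_arity f).-tuple bool}).
Definition theta0 (B : seq boolfun) : mso :=
  MAll2 0 (MImp (MAnd (MAll1 0 (bigAndM Cf B))
                      (MAll1 0 (MImp (MRel1 SReprPrem 0) (MIn 0 0))))
                (MAll1 0 (MImp (MRel1 SReprConc 0) (MIn 0 0)))).

Lemma wf_bigAnd B (T : eqType) (g : T -> mso) s :
  (forall x, x \in s -> mso_wf B (g x)) -> mso_wf B (bigAndM g s).
Proof.
elim: s => [|a s IH] H //=; split; first by apply: H; rewrite inE eqxx.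
by apply: IH => x Hx; apply: H; rewrite inE Hx orbT.
Qed.

Lemma wf_lit B b p : mso_wf B p -> mso_wf B (lit b p).
Proof. by case: b. Qed.

Lemma wf_theta B : mso_wf B (theta0 B).
Proof.
rewrite /=; split; [split|by []]; last by [].
apply: wf_bigAnd => f fB; apply: wf_bigAnd => t _ /=; split; last exact: wf_lit.
split.
  rewrite /root0; case: eqP => //= ->; by [].
apply: wf_bigAnd => i _ /=; split; last exact: wf_lit.
by split => //; rewrite ltn_ord.
Qed.

Fixpoint fok (bf bs : nat -> Prop) (p : mso) : Prop :=
  match p with
  | MRel1 _ x => bf x
  | MRel2 _ x y | MEq x y => bf x /\ bf y
  | MIn x X => bf x /\ bs X
  | MTrue | MFalse => True
  | MNot p => fok bf bs p
  | MAnd p q | MOr p q | MImp p q => fok bf bs p /\ fok bf bs q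
  | MEx1 x p | MAll1 x p => fok (fun n => n = x \/ bf n) bs p
  | MEx2 X p | MAll2 X p => fok bf (fun n => n = X \/ bs n) p
  end.

Lemma fok_free p : forall bf bs n, fok bf bs p ->
  (fo_free n p -> bf n) /\ (so_free n p -> bs n).
Proof.
elim: p => /=.
- by move=> _ x bf bs n H; split => // <-.
- by move=> _ x y bf bs n [H1 H2]; split => [[<-|<-]|]//.
- by move=> x y bf bs n [H1 H2]; split => [[<-|<-]|]//.
- by move=> x X bf bs n [H1 H2]; split => <-.
- by [].
- by [].
- by move=> p IH bf bs n H; apply: IH.
- move=> p IHp q IHq bf bs n [Hp Hq]; have := IHp _ _ n Hp; have := IHq _ _ n Hq.
  by move=> [a b] [c d]; split => [[]|[]]; auto.
- move=> p IHp q IHq bf bs n [Hp Hq]; have := IHp _ _ n Hp; have := IHq _ _ n Hq.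
  by move=> [a b] [c d]; split => [[]|[]]; auto.
- move=> p IHp q IHq bf bs n [Hp Hq]; have := IHp _ _ n Hp; have := IHq _ _ n Hq.
  by move=> [a b] [c d]; split => [[]|[]]; auto.
- move=> x p IH bf bs n H; have [a b] := IH _ _ n H; split; last exact: b.
  by move=> [nx /a [E|//]]; exfalso; apply: nx; rewrite E.
- move=> x p IH bf bs n H; have [a b] := IH _ _ n H; split; last exact: b.
  by move=> [nx /a [E|//]]; exfalso; apply: nx; rewrite E.
- move=> x p IH bf bs n H; have [a b] := IH _ _ n H; split; first exact: a.
  by move=> [nx /b [E|//]]; exfalso; apply: nx; rewrite E.
- move=> x p IH bf bs n H; have [a b] := IH _ _ n H; split; first exact: a.
  by move=> [nx /b [E|//]]; exfalso; apply: nx; rewrite E.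
Qed.

Lemma fok_mono p : forall (bf bs bf' bs' : nat -> Prop),
  (forall n, bf n -> bf' n) -> (forall n, bs n -> bs' n) ->
  fok bf bs p -> fok bf' bs' p.
Proof.
induction p as [| | | | | |p IH|p IH q IH'|p IH q IH'|p IH q IH'|x p IH|x p IH|x p IH|x p IH];
  simpl; intros bf bs bf' bs' H1 H2 H; try tauto.
all: try (destruct H; split; eauto; fail).
all: try (eauto; fail).
all: try (eapply IH; [| |exact H]; eauto; fail).
all: try (destruct H; split; [eapply IH|eapply IH']; eauto; fail).
all: eapply IH; [| |exact H]; auto; intros m [E|E]; auto.
Qed.

Lemma fok_bigAnd bf bs (T : eqType) (g : T -> mso) s :
  (forall x, x \in s -> fok bf bs (g x)) -> fok bf bs (bigAndM g s).
Proof.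
elim: s => [|a s IH] H //=; split; first by apply: H; rewrite inE eqxx.
by apply: IH => x Hx; apply: H; rewrite inE Hx orbT.
Qed.

Lemma lit_fok bf bs b p : fok bf bs p -> fok bf bs (lit b p).
Proof. by case: b. Qed.

Lemma closed_theta B : mso_closed (theta0 B).
Proof.
have H : fok (fun _ => False) (fun _ => False) (theta0 B).
  rewrite /=; split; [split|]; last by auto.
  - apply: fok_bigAnd => f _; apply: fok_bigAnd => t _ /=; split; last first.
      by apply: lit_fok => /=; auto.
    split; first by rewrite /root0; case: ifP => /=; auto.
    apply: fok_bigAnd => i _ /=; split; first by auto.
    by apply: lit_fok => /=; auto.
  - by auto.
move=> n; have [a b] := @fok_free _ _ _ n H; split; [move/a|move/b]; by [].
Qed.

Lemma sat_bigAnd A nu1 nu2 (T : eqType) (g : T -> mso) s :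
  sat A nu1 nu2 (bigAndM g s) <-> forall x, x \in s -> sat A nu1 nu2 (g x).
Proof.
elim: s => [|a s IH] /=; first by split => // _ x; rewrite in_nil.
rewrite IH; split.
  by move=> [H1 H2] x; rewrite inE => /orP [/eqP ->|/H2].
move=> H; split; first by apply: H; rewrite inE eqxx.
by move=> x Hx; apply: H; rewrite inE Hx orbT.
Qed.

Lemma sat_lit A nu1 nu2 b p : sat A nu1 nu2 (lit b p) <-> (sat A nu1 nu2 p <-> b).
Proof. case: b => /=; rewrite /is_true; intuition; discriminate. Qed.

Lemma sat_In00 A nu1 nu2 (u : univ A) S :
  nu1 0 = Some u -> nu2 0 = S -> sat A nu1 nu2 (MIn 0 0) <-> S u.
Proof.
move=> H1 H2 /=; rewrite H1 H2; split; first by move=> [w [[->] H]].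
by move=> H; exists u.
Qed.

Lemma sat_argok A nu1 nu2 (u : univ A) S f t i :
  nu1 0 = Some u -> nu2 0 = S ->
  sat A nu1 nu2 (@argok f t i) <->
  exists v, rel2 (SConn f i.+1) v u /\ (S v <-> tnth t i).
Proof.
move=> H1 H2 /=; split.
- move=> [v [[a [b [Ea [Eb R]]]] L]]; exists v.
  move: Ea Eb; rewrite /upd1 /= H1 => -[Ev] [Eu]; rewrite -Ev -Eu in R; split => //.
  move/sat_lit: L => <- /=; rewrite /upd1 /= H2; split; last by move=> [w [[->]]].
  by move=> Sv; exists v.
- move=> [v [R L]]; exists v; split.
    by exists v, u; rewrite /upd1 /= H1.
  apply/sat_lit; rewrite -L /= /upd1 /= H2; split; first by move=> [w [[->]]].
  by move=> Sv; exists v.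
Qed.

Lemma sat_Cft F G nu1 nu2 (u : AFG_univ F G) S f t :
  nu1 0 = Some u -> nu2 0 = S ->
  sat (AFG F G) nu1 nu2 (@Cft f t) <->
  ((bf_arity f = 0 -> proj1_sig u = App f nil) ->
   (forall i : 'I_(bf_arity f), exists v,
       AFG_rel2 (SConn f i.+1) v u /\ (S v <-> tnth t i)) ->
   (S u <-> projT2 f t)).
Proof.
move=> H1 H2.
have Hr : sat (AFG F G) nu1 nu2 (root0 f) <-> (bf_arity f = 0 -> proj1_sig u = App f nil).
  rewrite /root0; case: eqP => [E|NE] /=; rewrite ?H1.
    split; first by move=> [w [[<-] [_ ->]]].
    by move=> H; exists u; split => //; split => //; apply: H.
  by split => // _ /NE.
have Ha : sat (AFG F G) nu1 nu2 (bigAndM (@argok f t) (enum 'I_(bf_arity f))) <->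
  (forall i : 'I_(bf_arity f), exists v,
       AFG_rel2 (SConn f i.+1) v u /\ (S v <-> tnth t i)).
  rewrite sat_bigAnd; split.
    by move=> H i; apply: (proj1 (@sat_argok (AFG F G) nu1 nu2 u S f t i H1 H2)); apply: H; rewrite mem_enum.
  by move=> H i _; apply: (proj2 (@sat_argok (AFG F G) nu1 nu2 u S f t i H1 H2)); apply: H.
rewrite /Cft /=; rewrite Hr Ha sat_lit (@sat_In00 (AFG F G) nu1 nu2 u S H1 H2); tauto.
Qed.

Definition spec (B : seq boolfun) (F G : seq form) : Prop :=
  forall S : AFG_univ F G -> Prop,
  (forall (u : AFG_univ F G) f, f \in B -> forall t : (bf_arity f).-tuple bool,
   (bf_arity f = 0 -> proj1_sig u = App f nil) ->
   (forall i : 'I_(bf_arity f), exists v,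
       AFG_rel2 (SConn f i.+1) v u /\ (S v <-> tnth t i)) ->
   (S u <-> projT2 f t)) ->
  (forall u : AFG_univ F G, List.In (proj1_sig u) F -> S u) ->
  forall u : AFG_univ F G, List.In (proj1_sig u) G -> S u.

Lemma sem_theta B F G : models (AFG F G) (theta0 B) <-> spec B F G.
Proof.
rewrite /models /theta0 /spec /=.
have E : forall (S : AFG_univ F G -> Prop) (u : AFG_univ F G),
  upd1 (fun _ => None) 0 u 0 = Some u /\ upd2 (fun _ _ => False) 0 S 0 = S by [].
have Hc : forall S, sat (AFG F G) (fun _ => None) (upd2 (fun _ _ => False) 0 S)
    (MAll1 0 (bigAndM Cf B)) <->
  (forall (u : AFG_univ F G) f, f \in B -> forall t : (bf_arity f).-tuple bool,
   (bf_arity f = 0 -> proj1_sig u = App f nil) ->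
   (forall i : 'I_(bf_arity f), exists v,
       AFG_rel2 (SConn f i.+1) v u /\ (S v <-> tnth t i)) ->
   (S u <-> projT2 f t)).
  move=> S /=; split.
    move=> H u f fB t; have [e1 e2] := E S u.
    apply: (proj1 (sat_Cft F G _ _ u S f t e1 e2)); move/sat_bigAnd: (H u) => /(_ f fB).
    by move/sat_bigAnd => /(_ t); apply; rewrite mem_enum.
  move=> H u; have [e1 e2] := E S u; apply/sat_bigAnd => f fB.
  apply/sat_bigAnd => t _; apply: (proj2 (sat_Cft F G _ _ u S f t e1 e2)); exact: H.
have Hp : forall S (R : sym) (L : seq form),
  (forall u : AFG_univ F G, @AFG_rel1 F G R u <-> List.In (proj1_sig u) L) ->
  sat (AFG F G) (fun _ => None) (upd2 (fun _ _ => False) 0 S)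
    (MAll1 0 (MImp (MRel1 R 0) (MIn 0 0))) <->
  (forall u : AFG_univ F G, List.In (proj1_sig u) L -> S u).
  move=> S R L HR /=; rewrite /upd1 /upd2 /=; split.
    move=> Hall u Hu; have Hu' := proj2 (HR u) Hu.
    by have [w [[<-] Sw]] := Hall u (ex_intro _ u (conj erefl Hu')).
  move=> Hall u [w [[<-] Rw]]; exists u; split => //; apply: Hall; exact/HR.
split.
- move=> H S Hcons Hprem; apply/(Hp S SReprConc G) => //.
  apply: H; split; first exact/Hc.
  by apply/(Hp S SReprPrem F).
- move=> H S [/Hc Hcons /(Hp S SReprPrem F (fun _ => iff_refl _)) Hprem].
  by apply/(Hp S SReprConc G) => //; apply: H.
Qed.

Definition form_ind' (P : form -> Prop) (HV : forall v, P (Var v))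
  (HA : forall f args, (forall a, List.In a args -> P a) -> P (App f args)) :
  forall phi, P phi :=
  fix IH phi := match phi with
  | Var v => HV v
  | App f args => HA f args
      ((fix go (l : seq form) : forall a, List.In a l -> P a :=
          match l with
          | nil => fun a H => False_ind _ H
          | b :: l' => fun a H => match H with
                                  | or_introl e => eq_ind b P (IH b) a e
                                  | or_intror H' => go l' a H'
                                  end
          end) args)
  end.

Lemma Bform_App B f args : is_Bform B (App f args) ->
  f \in B /\ size args = bf_arity f /\ forall a, List.In a args -> is_Bform B a.
Proof.
move=> /= [fB [Hs H]]; split => //; split => //.
elim: args H {Hs} => [|b l IH] //= [Hb Hl] a [<-|Ha] //; exact: IH.
Qed.

Lemma subf_Bform B x y : subf x y -> is_Bform B y -> is_Bform B x.
Proof.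
elim => // x' f args a Hin _ IH /Bform_App [_ [_ H]]; apply: IH; exact: H.
Qed.

Lemma subf_trans x y z : subf x y -> subf y z -> subf x z.
Proof.
move=> Hxy Hyz; elim: Hyz Hxy => // y' f args a Hin _ IH Hxy.
eapply subf_arg; [exact Hin | exact (IH Hxy)].
Qed.

Lemma In_nth (d : form) args i : i < size args -> List.In (nth d args i) args.
Proof.
elim: args i => [|b l IH] [|i] //= H; first by left.
by right; apply: IH.
Qed.

Lemma nth_error_nth (d : form) args i : i < size args ->
  List.nth_error args i = Some (nth d args i).
Proof. by elim: args i => [|b l IH] [|i] //= H; apply: IH. Qed.

Lemma nth_error_nth' (d : form) args i a :
  List.nth_error args i = Some a -> nth d args i = a.
Proof. elim: args i => [|b l IH] [|i] //=; [by case | exact: IH]. Qed.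

Lemma nth_error_size (args : seq form) i a :
  List.nth_error args i = Some a -> i < size args.
Proof. by elim: args i => [|b l IH] [|i] //= /IH. Qed.

Lemma bf_apply_tuple f (t : (bf_arity f).-tuple bool) :
  bf_apply f (val t) = projT2 f t.
Proof. by rewrite /bf_apply valK. Qed.

Lemma sig_eq F G (u v : AFG_univ F G) : proj1_sig u = proj1_sig v -> u = v.
Proof.
case: u => x hx; case: v => y hy /= E; subst y.
by rewrite (proof_irrelevance _ hx hy).
Qed.

Arguments subf_Bform {B x y}.
Arguments subf_trans {x y z}.
Arguments In_nth d {args i}.
Arguments nth_error_nth d {args i}.
Arguments nth_error_nth' d {args i a}.

Theorem lemma2 (B : seq boolfun) :
  exists theta : mso,
    mso_wf B theta /\ mso_closed theta /\
    forall (Gamma F G : seq form),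
      (forall phi, List.In phi Gamma -> is_Bform B phi) ->
      (forall phi, List.In phi F -> List.In phi Gamma) ->
      (forall phi, List.In phi G -> List.In phi Gamma) ->
      (entails F G <-> models (AFG F G) theta).
Proof.
exists (theta0 B); split; first exact: wf_theta.
split; first exact: closed_theta.
move=> Gamma F G HGam HF HG; rewrite sem_theta.
have HB : forall u : AFG_univ F G, is_Bform B (proj1_sig u).
  move=> [x [phi [Hin Hs]]] /=; apply: (subf_Bform Hs); apply: HGam.
  by case: (List.in_app_or _ _ _ Hin) => [/HF|/HG].
have Hsub : forall (u : AFG_univ F G) f args, proj1_sig u = App f args ->
    forall a, List.In a args -> exists v : AFG_univ F G, proj1_sig v = a.
  move=> [x [phi [Hin Hs]]] f args /= Ex a Ha.
  have Hs' : subf a phi.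
    apply: subf_trans Hs; rewrite Ex; eapply subf_arg; [exact Ha|exact: subf_refl].
  by exists (exist _ a (ex_intro _ phi (conj Hin Hs'))).
pose mkF := fun phi (Hp : List.In phi F) =>
  (exist _ phi (ex_intro _ phi (conj (List.in_or_app F G phi (or_introl Hp)) (subf_refl phi))) : AFG_univ F G).
pose mkG := fun phi (Hp : List.In phi G) =>
  (exist _ phi (ex_intro _ phi (conj (List.in_or_app F G phi (or_intror Hp)) (subf_refl phi))) : AFG_univ F G).
split.
-
  move=> Hent S Hcons Hprem u HuG.
  pose sigma (v : nat) : bool :=
    if excluded_middle_informative
         (exists w : AFG_univ F G, proj1_sig w = Var v /\ S w) then true else false.
  have Claim : forall x (w : AFG_univ F G), proj1_sig w = x -> (eval sigma x <-> S w).
    elim/form_ind' => [v|f args IH] w Ew /=.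
    + rewrite /sigma; case: excluded_middle_informative => [[w' [E' Sw']]|N].
        by have -> : w = w' by apply: sig_eq; rewrite Ew E'.
      by split => // Sw; exfalso; apply: N; exists w.
    + have := HB w; rewrite Ew => /Bform_App [fB [Hsz _]].
      have Hs : size (map (eval sigma) args) == bf_arity f by rewrite size_map Hsz.
      pose t := Tuple Hs.
      have -> : bf_apply f (map (eval sigma) args) = projT2 f t.
        by rewrite -bf_apply_tuple.
      symmetry; apply: (Hcons w f fB t).
        by move=> A0; rewrite Ew; move: Hsz; rewrite A0 => /size0nil ->.
      move=> i.
      have Hi : i < size args by rewrite Hsz.
      have Hin := In_nth (Var 0) Hi.
      have [v Ev] := Hsub w f args Ew _ Hin.
      exists v; split.
        exists args; split => //; split => //; rewrite subn1 /= Ev.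
        exact: nth_error_nth.
      rewrite (tnth_nth false) /= (nth_map (Var 0)) //.
      by rewrite (IH _ Hin v Ev).
  have Hsig : forall phi, List.In phi F -> eval sigma phi.
    move=> phi Hp; apply/(Claim phi (mkF phi Hp)) => //; exact: Hprem.
  apply/(Claim _ u erefl); exact: Hent Hsig _ HuG.
-
  move=> Hspec sigma HsF psi Hpsi.
  pose S (u : AFG_univ F G) : Prop := eval sigma (proj1_sig u).
  have := Hspec S _ _ (mkG psi Hpsi) Hpsi; apply.
    move=> u f fB t Hroot Hargs; rewrite /S.
    have Hgf : exists args, proj1_sig u = App f args.
      case: (eqVneq (bf_arity f) 0) => [A0|A0].
        by exists nil; apply: Hroot.
      have Hp : 0 < bf_arity f by rewrite lt0n.
      have [v [[args [E _]] _]] := Hargs (Ordinal Hp).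
      by exists args.
    case: Hgf => args Eu; rewrite Eu /=.
    have := HB u; rewrite Eu => /Bform_App [_ [Hsz _]].
    have -> : map (eval sigma) args = val t.
      apply: (eq_from_nth (x0 := false)); first by rewrite size_map size_tuple.
      move=> i; rewrite size_map Hsz => Hi.
      have [v [[args' [E' [_ Hn]]] Hv]] := Hargs (Ordinal Hi).
      move: E'; rewrite Eu => -[E']; subst args'.
      move: Hn; rewrite subn1 /= => Hn.
      rewrite (nth_map (Var 0)); last by rewrite Hsz.
      rewrite (nth_error_nth' (Var 0) Hn) -(tnth_nth false t (Ordinal Hi)).
      by apply/idP/idP => H; apply/Hv.
    by rewrite bf_apply_tuple.
  move=> u Hu; exact: HsF.
Qed.
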